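(* Let $A\in\mathbb{R}_+^{n\times n}$ have all entries strictly positive. Then the following are equivalent: (i) $\frac{1}{n}\sum_{i=1}^n\sum_{j=1}^n a_{i,j}=\max_{B\in\Omega(A)}\rho(B)$; (ii) either the all-ones vector $(1,\dots,1)^T$ is an eigenvector of $A$ for the eigenvalue $\rho(A)$ (equivalently, all row sums of $A$ are equal), or there exists a nonsingular nonnegative diagonal matrix $D=\mathrm{diag}(d_1,\dots,d_n)$ such that $DA$ is the all-ones matrix, i.e. $d_i a_{i,j}=1$ for all $i,j$; (iii) $\frac{1}{n}\sum_{i=1}^n\sum_{j=1}^n a_{i,j}=\min_{B\in\Omega(A)}\rho(B)$.
   Context: For $A=(a_{i,j})\in\mathbb{R}_+^{n\times n}$ (nonnegative $n\times n$ matrices), $\Omega(A)=\{B\in\mathbb{R}_+^{n\times n}:\ \forall i\ \exists\text{ a permutation }\phi_i\text{ of }\{1,\dots,n\}\text{ with } b_{i,j}=a_{i,\phi_i(j)}\ \forall j\}$, the set of matrices whose rows are rearrangements of the corresponding rows of $A$. $\rho(B)$ denotes the spectral radius (Perron root) of $B$. *)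

(* Defs.v *)
From HB Require Import structures.
From mathcomp Require Import all_boot all_order all_algebra all_fingroup.
From mathcomp Require Import complex.
Set Implicit Arguments. Unset Strict Implicit. Unset Printing Implicit Defensive.
Import Order.TTheory GRing.Theory Num.Theory.
Local Open Scope ring_scope.

(* Coefficients: an arbitrary real closed field R (e.g. the reals);
   eigenvalues are taken in its algebraic closure R[i] = complex R. *)

Definition eigenvalues (R : rcfType) (n : nat) (B : 'M[R]_n) : seq R[i] :=
  sval (closed_field_poly_normal (char_poly (map_mx (real_complex R) B))).

(* Spectral radius: the largest modulus of an eigenvalue (0 if n = 0). *)
Definition spectral_radius (R : rcfType) (n : nat) (B : 'M[R]_n) : R :=
  \big[Num.max/0]_(z <- eigenvalues B) ComplexField.Normc.normc z.

Definition in_Omega (R : rcfType) (n : nat) (A B : 'M[R]_n) : Prop :=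
  forall i : 'I_n, exists s : 'S_n, forall j : 'I_n, B i j = A i (s j).

Definition is_max_rho_Omega (R : rcfType) (n : nat) (A : 'M[R]_n) (m : R) : Prop :=
  (exists2 B, in_Omega A B & spectral_radius B = m) /\
  (forall B, in_Omega A B -> spectral_radius B <= m).
Definition is_min_rho_Omega (R : rcfType) (n : nat) (A : 'M[R]_n) (m : R) : Prop :=
  (exists2 B, in_Omega A B & spectral_radius B = m) /\
  (forall B, in_Omega A B -> m <= spectral_radius B).

(* Main.v *)
Require Import Defs.
From HB Require Import structures.
From mathcomp Require Import all_boot all_order all_algebra all_fingroup.
From mathcomp Require Import complex.
From mathcomp Require Import polyrcf ring lra.
From Stdlib Require Import Classical_Prop.
Import Order.TTheory GRing.Theory Num.Theory.
Local Open Scope ring_scope.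

Lemma argmin_ex {R : realDomainType} {n} (hn : (0 < n)%N) (f : 'I_n -> R) :
  exists i0, forall j, f i0 <= f j.
Proof.
exists [arg min_(i < Ordinal hn) f i]%O.
by case: arg_minP => // i _ H j; apply: H.
Qed.

Lemma argmax_ex {R : realDomainType} {n} (hn : (0 < n)%N) (f : 'I_n -> R) :
  exists i0, forall j, f j <= f i0.
Proof.
exists [arg max_(i > Ordinal hn) f i]%O.
by case: arg_maxP => // i _ H j; apply: H.
Qed.

Lemma mono_pos {R : realFieldType} {n} (hn : (0 < n)%N) (B : 'M[R]_n)
  (w y : 'I_n -> R) (t k : R) :
  (forall i j, 0 <= B i j) -> (forall i, 0 < w i) -> 0 < k ->
  (forall i, \sum_j B i j * w j < t * w i) ->
  (forall i, t * y i - \sum_j B i j * y j = k * w i) ->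
  forall i, 0 < y i.
Proof.
move=> hB hw hk ht hy.
have [i0 Hi0] := argmin_ex hn (fun i => y i / w i).
set z := y i0 / w i0 in Hi0.
have yz : forall j, z * w j <= y j.
  by move=> j; rewrite -ler_pdivlMr // Hi0.
suff zpos : 0 < z.
  by move=> i; apply: lt_le_trans (yz i); rewrite mulr_gt0.
rewrite ltNge; apply/negP => z0.
have := hy i0.
have e1 : z * \sum_j B i0 j * w j <= \sum_j B i0 j * y j.
  rewrite mulr_sumr; apply: ler_sum => j _.
  by rewrite mulrCA ler_wpM2l.
have yi0 : y i0 = z * w i0 by rewrite /z divfK // gt_eqF.
move=> H.
have : k * w i0 <= z * (t * w i0 - \sum_j B i0 j * w j).
  rewrite -H yi0 mulrBr mulrCA; apply: lerB => //.
have : z * (t * w i0 - \sum_j B i0 j * w j) <= 0.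
  by apply: mulr_le0_ge0 => //; rewrite subr_ge0 ltW.
move=> h1 h2.
have := le_trans h2 h1.
by rewrite leNgt mulr_gt0.
Qed.

Lemma pos_prop {R : realFieldType} {n} (B : 'M[R]_n)
  (w y : 'I_n -> R) (t k : R) :
  (forall i j, 0 <= B i j) -> (forall i, 0 < w i) -> 0 < k -> 0 < t ->
  (forall i, 0 <= y i) ->
  (forall i, t * y i - \sum_j B i j * y j = k * w i) ->
  forall i, 0 < y i.
Proof.
move=> hB hw hk ht hy0 hy i.
have : 0 < t * y i.
  have := hy i; move/eqP; rewrite subr_eq => /eqP ->.
  by rewrite ltr_wpDr ?sumr_ge0 // => [j _|]; rewrite ?mulr_ge0 ?mulr_gt0.
by rewrite pmulr_rgt0.
Qed.

Lemma at_c {R : realFieldType} {n} (hn : (0 < n)%N) (B : 'M[R]_n)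
  (w y : 'I_n -> R) (c k : R) :
  (forall i j, 0 <= B i j) -> (forall i, 0 < w i) -> 0 < k ->
  (forall i, c * w i <= \sum_j B i j * w j) ->
  (forall i, 0 < y i) ->
  (forall i, c * y i - \sum_j B i j * y j = k * w i) -> False.
Proof.
move=> hB hw hk hc hy0 hy.
have [i0 Hi0] := argmin_ex hn (fun i => y i / w i).
set z := y i0 / w i0 in Hi0.
have yz : forall j, z * w j <= y j.
  by move=> j; rewrite -ler_pdivlMr // Hi0.
have z0 : 0 <= z by rewrite divr_ge0 // ltW.
have e1 : z * \sum_j B i0 j * w j <= \sum_j B i0 j * y j.
  rewrite mulr_sumr; apply: ler_sum => j _.
  by rewrite mulrCA ler_wpM2l.
have yi0 : y i0 = z * w i0 by rewrite /z divfK // gt_eqF.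
have := hy i0; rewrite yi0 => H.
have : k * w i0 <= 0.
  rewrite -H subr_le0 (le_trans _ e1) // mulrCA ler_wpM2l //.
by rewrite leNgt mulr_gt0.
Qed.
Lemma adj_eval {R : comNzRingType} {n} (B : 'M[R]_n) (w : 'I_n -> R) t i :
  let U := \adj (char_poly_mx B) *m \col_i (w i)%:P in
  t * (U i 0).[t] - \sum_j B i j * (U j 0).[t] = (char_poly B).[t] * w i.
Proof.
move=> U.
have H : char_poly_mx B *m U = char_poly B *: \col_i (w i)%:P.
  by rewrite /U mulmxA mul_mx_adj mul_scalar_mx.
have /matrixP/(_ i 0) := H.
rewrite [LHS]mxE [RHS]mxE [X in _ * X]mxE => /(congr1 (horner^~ t)); rewrite hornerM hornerC => <-.
clearbody U.
rewrite horner_sum (bigD1 i) //= (bigD1 i (P:=predT)) //=.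
rewrite [in RHS](eq_bigr (fun j => - (B i j * (U j 0).[t]))); last first.
  move=> j ji; rewrite /char_poly_mx !mxE eq_sym (negPf ji) mulr0n sub0r.
  by rewrite hornerM hornerN hornerC mulNr.
rewrite sumrN /char_poly_mx !mxE eqxx mulr1n hornerM hornerD hornerN hornerX hornerC.
ring.
Qed.

Lemma no_real_root_ge {R : rcfType} {n} (hn : (0 < n)%N) (B : 'M[R]_n)
    (w : 'I_n -> R) (c : R) :
  (forall i j, 0 <= B i j) -> (forall i, 0 < w i) -> 0 < c ->
  (forall i, c * w i <= \sum_j B i j * w j) ->
  ~ (forall t, c <= t -> ~~ root (char_poly B) t).
Proof.
move=> hB hw hc hBw Hno.
pose P := char_poly B.
pose U := \adj (char_poly_mx B) *m \col_i (w i)%:P.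
pose u i := P * U i 0.
have key : forall t i, t * (u i).[t] - \sum_j B i j * (u j).[t] = P.[t]^+2 * w i.
  move=> t i; have E := adj_eval B w t i; rewrite -/U -/P in E.
  rewrite /u hornerM (eq_bigr (fun j => P.[t] * (B i j * (U j 0).[t]))); last first.
    by move=> j _; rewrite hornerM mulrCA.
  by rewrite -mulr_sumr expr2 -mulrA -E; ring.
have Ppos : forall t, c <= t -> 0 < P.[t]^+2.
  move=> t ct; rewrite exprn_even_gt0 //=; apply/negP => /eqP H0.
  by have := Hno t ct; rewrite /root -/P H0 eqxx.
pose T := c + 1 + \sum_i (\sum_j B i j * w j) / w i.
have fge : forall i, 0 <= (\sum_j B i j * w j) / w i.
  by move=> i; rewrite divr_ge0 ?sumr_ge0 // => [j _|]; rewrite ?mulr_ge0 // ltW.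
have hT : forall i, \sum_j B i j * w j < T * w i.
  move=> i; rewrite -ltr_pdivrMr //.
  rewrite /T [X in _ < _ + X](bigD1 i) //=.
  have : 0 <= \sum_(i0 | i0 != i) (\sum_j B i0 j * w j) / w i0 by apply: sumr_ge0.
  have := fge i; lra.
have cT : c < T.
  rewrite /T; have : 0 <= \sum_i (\sum_j B i j * w j) / w i by apply: sumr_ge0.
  lra.
have uT : forall i, 0 < (u i).[T].
  apply: (mono_pos hn B w (fun i => (u i).[T]) T (P.[T]^+2)) => //.
  by apply: Ppos; rewrite ltW.
pose Q := \prod_i u i.
have QT : 0 < Q.[T] by rewrite /Q horner_prod prodr_gt0.
have Q0 : Q != 0 by apply: contraTneq QT => ->; rewrite horner0 ltxx.
have [t0 [ct0 t0T hnr alt]] : exists t0, [/\ c <= t0, t0 < T,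
    (forall z, z \in `]t0, T[ -> ~~ root Q z) & (Q.[t0] = 0 \/ t0 = c)].
  case: (prev_rootP Q c T) => [Q0'| y _ Qy yin hno | c' _ c'e hno].
  - by rewrite Q0' eqxx in Q0.
  - exists y; split => //; first by rewrite ltW // (itvP yin).
    + by rewrite (itvP yin).
    + by left.
  - by exists c; split => //; right.
have ut0 : forall i, 0 <= (u i).[t0].
  move=> i; rewrite leNgt; apply/negP => neg.
  have neg2 : (u i).[t0] * (u i).[T] < 0 by rewrite pmulr_llt0.
  have [x xin rx] := poly_ivtoo (ltW t0T) neg2.
  have := hnr x xin; rewrite /root /Q horner_prod (bigD1 i) //=.
  by move: rx; rewrite /root => /eqP ->; rewrite mul0r eqxx.
have kpos := Ppos t0 ct0.
have t0pos : 0 < t0 by apply: lt_le_trans ct0.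
have ut0p : forall i, 0 < (u i).[t0].
  exact: (pos_prop B w (fun i => (u i).[t0]) t0 (P.[t0]^+2)).
case: alt => [Qt0 | et0].
  have : 0 < Q.[t0] by rewrite /Q horner_prod prodr_gt0.
  by rewrite Qt0 ltxx.
rewrite et0 in ut0p kpos.
apply: (at_c hn B w (fun i => (u i).[c]) c (P.[c]^+2)) => //.
Qed.
Lemma char_poly_tr {R : comNzRingType} {n} (B : 'M[R]_n) :
  char_poly B^T = char_poly B.
Proof.
rewrite /char_poly -det_tr; congr (\det _).
by apply/matrixP => i j; rewrite !mxE eq_sym.
Qed.

Lemma normc_real {R : rcfType} (t : R) : 0 <= t -> ComplexField.Normc.normc (t%:C)%C = t.
Proof. by move=> t0; rewrite /ComplexField.Normc.normc /= expr0n /= addr0 sqrtr_sqr ger0_norm. Qed.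

Lemma normcE {R : rcfType} (z : R[i]) : `|z| = ((ComplexField.Normc.normc z)%:C)%C.
Proof. by case: z => a b; rewrite normc_def. Qed.


Lemma eig_root {R : rcfType} {n} (B : 'M[R]_n) z :
  z \in eigenvalues B = root (char_poly (map_mx (real_complex R) B)) z.
Proof.
rewrite /eigenvalues; case: (closed_field_poly_normal _) => r /= Hr.
rewrite [in RHS]Hr (monicP (char_poly_monic _)) scale1r.
by rewrite root_prod_XsubC.
Qed.

Lemma eig_vec {R : rcfType} {n} (B : 'M[R]_n) z : z \in eigenvalues B ->
  exists2 v : 'I_n -> R[i], (exists k, v k != 0) &
     forall i, \sum_j ((B i j)%:C)%C * v j = z * v i.
Proof.
rewrite eig_root -char_poly_tr -eigenvalue_root_char => /eigenvalueP [v Hv v0].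
exists (fun j => v 0 j).
  case: (pickP (fun k => v 0 k != 0)) => [k Hk|H]; first by exists k.
  case/negP: v0; apply/eqP/rowP => j; rewrite mxE.
  by have := H j; move/negbFE/eqP.
move=> i; have /rowP/(_ i) := Hv; rewrite !mxE => <-.
by apply: eq_bigr => j _; rewrite !mxE mulrC.
Qed.

Lemma normc_ge0 {R : rcfType} (z : R[i]) : 0 <= ComplexField.Normc.normc z.
Proof. by rewrite -lecR -normcE normr_ge0. Qed.

Lemma rho_le {R : rcfType} {n} (hn : (0 < n)%N) (B : 'M[R]_n) (w : 'I_n -> R) (c : R) :
  (forall i j, 0 <= B i j) -> (forall i, 0 < w i) -> 0 <= c ->
  (forall i, \sum_j B i j * w j <= c * w i) ->
  spectral_radius B <= c.
Proof.
move=> hB hw hc hBw.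
rewrite /spectral_radius big_seq; apply: bigmax_le => // z /eig_vec [v [k vk] Hv].
pose N j := ComplexField.Normc.normc (v j).
have [i0 Hi0] := argmax_ex hn (fun j => N j / w j).
set m := N i0 / w i0 in Hi0.
have Nk : 0 < N k.
  rewrite lt_neqAle normc_ge0 andbT eq_sym; apply: contra vk => /eqP.
  by move/(congr1 (real_complex R)); rewrite -normcE => /eqP; rewrite normr_eq0 => /eqP ->.
have mpos : 0 < m by apply: lt_le_trans (Hi0 k); rewrite divr_gt0.
have Nle : forall j, N j <= m * w j by move=> j; rewrite -ler_pdivrMr // Hi0.
have Ni0 : N i0 = m * w i0 by rewrite /m divfK // gt_eqF.
have Ni0p : 0 < N i0 by rewrite Ni0 mulr_gt0.
have tri : ComplexField.Normc.normc z * N i0 <= \sum_j B i0 j * N j.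
  rewrite /N -ComplexField.Normc.normcM -Hv -lecR -normcE rmorph_sum /=.
  apply: le_trans (ler_norm_sum _ _ _) _; apply: ler_sum => j _.
  by rewrite normcE ComplexField.Normc.normcM normc_real.
have : ComplexField.Normc.normc z * N i0 <= c * N i0.
  apply: le_trans tri _; apply: le_trans (_ : \sum_j B i0 j * (m * w j) <= _).
    by apply: ler_sum => j _; rewrite ler_wpM2l.
  rewrite (eq_bigr (fun j => m * (B i0 j * w j))); last by move=> j _; rewrite mulrCA.
  by rewrite -mulr_sumr Ni0 mulrCA ler_wpM2l // ltW.
by rewrite ler_pM2r.
Qed.

Lemma rho_ge {R : rcfType} {n} (hn : (0 < n)%N) (B : 'M[R]_n) (w : 'I_n -> R) (c : R) :
  (forall i j, 0 <= B i j) -> (forall i, 0 < w i) -> 0 < c ->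
  (forall i, c * w i <= \sum_j B i j * w j) ->
  c <= spectral_radius B.
Proof.
move=> hB hw hc hBw; rewrite leNgt; apply/negP => lt.
apply: (no_real_root_ge hn B w c) => // t ct; apply/negP => rt.
have : (t%:C)%C \in eigenvalues B.
  by rewrite eig_root -map_char_poly rmorph_root.
move=> /(le_bigmax_seq 0 _ predT (@ComplexField.Normc.normc R)) /(_ isT).
rewrite normc_real; last by apply: le_trans ct; apply: ltW.
move=> h; have := lt_le_trans lt (le_trans ct h).
by rewrite ltxx.
Qed.


Lemma rho_gt {R : rcfType} {n} (hn : (0 < n)%N) (B : 'M[R]_n) (w : 'I_n -> R) (c : R) :
  (forall i j, 0 < B i j) -> (forall i, 0 < w i) -> 0 < c ->
  (forall i, c * w i <= \sum_j B i j * w j) ->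
  (exists i, c * w i < \sum_j B i j * w j) ->
  c < spectral_radius B.
Proof.
move=> hB hw hc hBw [i1 hi1].
pose y i := \sum_j B i j * w j.
have ypos : forall i, 0 < y i by move=> i; apply: lt_le_trans (hBw i); rewrite mulr_gt0.
have gap : forall i, c * y i < \sum_j B i j * y j.
  move=> i; rewrite -subr_gt0 /y mulr_sumr -sumrB.
  rewrite (eq_bigr (fun j => B i j * (y j - c * w j))); last first.
    by move=> j _; rewrite /y mulrBr mulrCA.
  rewrite (bigD1 i1) //=; apply: ltr_pwDl.
    by rewrite mulr_gt0 // subr_gt0.
  by apply: sumr_ge0 => j _; rewrite mulr_ge0 ?subr_ge0 // ltW.
have [i0 Hi0] := argmin_ex hn (fun i => (\sum_j B i j * y j) / y i).
set c' := (\sum_j B i0 j * y j) / y i0 in Hi0.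
have cc' : c < c' by rewrite ltr_pdivlMr // mulrC gap.
apply: (lt_le_trans cc').
apply: (rho_ge hn B y) => //.
- by move=> i j; apply: ltW.
- by apply: lt_trans cc'.
- by move=> i; rewrite -ler_pdivlMr // Hi0.
Qed.

Lemma rho_lt {R : rcfType} {n} (hn : (0 < n)%N) (B : 'M[R]_n) (w : 'I_n -> R) (c : R) :
  (forall i j, 0 < B i j) -> (forall i, 0 < w i) ->
  (forall i, \sum_j B i j * w j <= c * w i) ->
  (exists i, \sum_j B i j * w j < c * w i) ->
  spectral_radius B < c.
Proof.
move=> hB hw hBw [i1 hi1].
pose y i := \sum_j B i j * w j.
have ypos : forall i, 0 < y i.
  move=> i; rewrite /y (bigD1 i) //= ltr_pwDl ?mulr_gt0 //.
  by apply: sumr_ge0 => j _; rewrite mulr_ge0 // ltW.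
have gap : forall i, \sum_j B i j * y j < c * y i.
  move=> i; rewrite -subr_gt0 /y mulr_sumr -sumrB.
  rewrite (eq_bigr (fun j => B i j * (c * w j - y j))); last first.
    by move=> j _; rewrite /y mulrBr mulrCA.
  rewrite (bigD1 i1) //=; apply: ltr_pwDl.
    by rewrite mulr_gt0 // subr_gt0.
  by apply: sumr_ge0 => j _; apply: mulr_ge0; [exact: ltW | rewrite subr_ge0; exact: hBw].
have [i0 Hi0] := argmax_ex hn (fun i => (\sum_j B i j * y j) / y i).
set c' := (\sum_j B i0 j * y j) / y i0 in Hi0.
have cc' : c' < c by rewrite ltr_pdivrMr // mulrC gap.
apply: (le_lt_trans _ cc').
apply: (rho_le hn B y) => //.
- by move=> i j; apply: ltW.
- apply: divr_ge0; [apply: sumr_ge0 => j _; apply: mulr_ge0; apply: ltW; [exact: hB|exact: ypos] | exact: ltW].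
- by move=> i; rewrite -ler_pdivrMr // Hi0.
Qed.


Lemma perm_sum_indep {R : nmodType} {n} (a : 'I_n -> R) (j k : 'I_n) :
  \sum_(s : 'S_n) a (s j) = \sum_(s : 'S_n) a (s k).
Proof.
rewrite (reindex_inj (mulgI (tperm j k))) /=.
by apply: eq_bigr => s _; rewrite permM tpermL.
Qed.

Lemma perm_avg {R : fieldType} {n} (hn : (0 < n)%N) (a w : 'I_n -> R) :
  n%:R * \sum_(s : 'S_n) \sum_j a (s j) * w j =
  #|'S_n|%:R * (\sum_j a j) * (\sum_j w j).
Proof.
pose i0 := Ordinal hn.
rewrite exchange_big /=.
rewrite (eq_bigr (fun j => (\sum_(s : 'S_n) a (s i0)) * w j)); last first.
  by move=> j _; rewrite -mulr_suml; congr (_ * _); apply: perm_sum_indep.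
rewrite -mulr_sumr mulrA; congr (_ * _).
have -> : n%:R * \sum_(s : 'S_n) a (s i0) = \sum_(j < n) \sum_(s : 'S_n) a (s j).
  rewrite [RHS](eq_bigr (fun j => \sum_(s : 'S_n) a (s i0))); last first.
    by move=> j _; apply: perm_sum_indep.
  by rewrite sumr_const card_ord mulr_natl.
rewrite exchange_big /=.
rewrite (eq_bigr (fun s => \sum_j a j)); last first.
  by move=> s _; rewrite [RHS](reindex_inj (@perm_inj _ s)).
by rewrite sumr_const mulr_natl.
Qed.

Lemma perm_max {R : realFieldType} {n} (hn : (0 < n)%N) (a w : 'I_n -> R) :
  let f (s : 'S_n) := \sum_j a (s j) * w j in
  let m := (\sum_j a j) * (\sum_j w j) / n%:R in
  exists s, m <= f s /\ ((exists s1 s2, f s1 != f s2) -> m < f s).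
Proof.
move=> f m.
have sumf : \sum_s (m - f s) = 0.
  rewrite sumrB sumr_const -mulr_natl.
  have nz : n%:R != 0 :> R by rewrite pnatr_eq0 -lt0n.
  apply/eqP; rewrite subr_eq0; apply/eqP.
  apply: (mulfI nz); rewrite perm_avg // /m.
  by field.
pose s := [arg max_(s > (1%g : 'S_n)) f s]%O.
have smax : forall t, f t <= f s by rewrite /s; case: arg_maxP => // x _ H t; apply: H.
have allm : f s <= m -> forall t, f t = m.
  move=> fsm t; apply/eqP; rewrite eq_sym -subr_eq0; apply/eqP.
  apply: (psumr_eq0P _ sumf) => // u _.
  by rewrite subr_ge0 (le_trans (smax u)).
exists s; split.
  rewrite leNgt; apply/negP => lt.
  by have := allm (ltW lt) s; move=> e; rewrite e ltxx in lt.
move=> [s1 [s2 ne]]; rewrite ltNge; apply/negP => le.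
by rewrite (allm le s1) (allm le s2) eqxx in ne.
Qed.

Lemma perm_min {R : realFieldType} {n} (hn : (0 < n)%N) (a w : 'I_n -> R) :
  let f (s : 'S_n) := \sum_j a (s j) * w j in
  let m := (\sum_j a j) * (\sum_j w j) / n%:R in
  exists s, f s <= m /\ ((exists s1 s2, f s1 != f s2) -> f s < m).
Proof.
move=> f m.
have [s [h1 h2]] := perm_max hn (fun j => - a j) w.
have E1 : \sum_j - a j = - \sum_j a j by rewrite sumrN.
have E2 : forall t : 'S_n, \sum_j - a (t j) * w j = - f t.
  by move=> t; rewrite /f -sumrN; apply: eq_bigr => j _; rewrite mulNr.
rewrite /= E1 E2 !mulNr lerN2 in h1.
exists s; split => // hne.
have := h2 _; rewrite /= E1 E2 !mulNr ltrN2; apply.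
move: hne => [s1 [s2 ne]]; exists s1, s2.
by rewrite !E2 eqr_opp.
Qed.

Lemma perm_nonconst {R : realFieldType} {n} (a w : 'I_n -> R) (j1 j2 k1 k2 : 'I_n) :
  a j1 != a j2 -> w k1 != w k2 ->
  let f (s : 'S_n) := \sum_j a (s j) * w j in
  exists s1 s2, f s1 != f s2.
Proof.
move=> ha hw f.
have jne : j1 != j2 by apply: contraNneq ha => ->.
have kne : k1 != k2 by apply: contraNneq hw => ->.
pose t := tperm k1 k2.
have diff : forall s : 'S_n, f s - f (t * s)%g = (a (s k1) - a (s k2)) * (w k1 - w k2).
  move=> s.
  have -> : f (t * s)%g = \sum_j a (s j) * w (t j).
    rewrite /f [RHS](reindex_inj (@perm_inj _ t)); apply: eq_bigr => j _.
    by rewrite permM tpermK.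
  rewrite /f -sumrB (bigD1 k1) //= (bigD1 k2) /=; last by rewrite eq_sym.
  rewrite big1; last first.
    move=> j /andP [jk2 jk1]; rewrite tpermD; last 2 first.
    - by rewrite eq_sym.
    - by rewrite eq_sym.
    by rewrite subrr.
  rewrite tpermL tpermR; ring.
pose m := tperm k1 j1 k2.
pose s := (tperm k1 j1 * tperm m j2)%g.
have mj1 : m != j1.
  rewrite /m -{2}(tpermL k1 j1) (inj_eq (@perm_inj _ (tperm k1 j1))).
  by rewrite eq_sym.
have sk1 : s k1 = j1 by rewrite /s permM tpermL tpermD // eq_sym.
have sk2 : s k2 = j2 by rewrite /s permM -/m tpermL.
exists s, (t * s)%g.
by rewrite -subr_eq0 diff sk1 sk2 mulf_neq0 // subr_eq0.
Qed.


Lemma sum_pos {R : numDomainType} {n} (hn : (0 < n)%N) (f : 'I_n -> R) :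
  (forall j, 0 < f j) -> 0 < \sum_j f j.
Proof.
move=> hf; rewrite (bigD1 (Ordinal hn)) //= ltr_pwDl //.
by apply: sumr_ge0 => j _; apply: ltW.
Qed.

Lemma omega_pos {R : rcfType} {n} (A B : 'M[R]_n) :
  (forall i j, 0 < A i j) -> in_Omega A B -> forall i j, 0 < B i j.
Proof. by move=> hA hB i j; have [s ->] := hB i. Qed.

Lemma omega_rowsum {R : rcfType} {n} (A B : 'M[R]_n) :
  in_Omega A B -> forall i, \sum_j B i j = \sum_j A i j.
Proof.
move=> hB i; have [s Hs] := hB i.
rewrite (eq_bigr (fun j => A i (s j))) //.
by rewrite [RHS](reindex_inj (@perm_inj _ s)).
Qed.

Lemma omega_refl {R : rcfType} {n} (A : 'M[R]_n) : in_Omega A A.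
Proof. by move=> i; exists 1%g => j; rewrite perm1. Qed.

Lemma eq_rows_rho {R : rcfType} {n} (hn : (0 < n)%N) (B : 'M[R]_n) r0 :
  (forall i j, 0 < B i j) -> (forall i, \sum_j B i j = r0) -> spectral_radius B = r0.
Proof.
move=> hB hr.
have r0p : 0 < r0 by rewrite -(hr (Ordinal hn)) sum_pos.
have e : forall i, \sum_j B i j * 1 = r0 * 1.
  by move=> i; rewrite mulr1 -(hr i); apply: eq_bigr => j _; rewrite mulr1.
apply/le_anti/andP; split.
  apply: (rho_le hn B (fun _ => 1)) => //; try (by move=> i j; apply: ltW);
    try (by move=> i; rewrite e); try (by apply: ltW).
apply: (rho_ge hn B (fun _ => 1)) => //; try (by move=> i j; apply: ltW);
    try (by move=> i; rewrite e).
Qed.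

Lemma const_rows_rho {R : rcfType} {n} (hn : (0 < n)%N) (B : 'M[R]_n) :
  (forall i j, 0 < B i j) -> (forall i j, B i j = B i (Ordinal hn)) ->
  spectral_radius B = \sum_i B i (Ordinal hn).
Proof.
move=> hB hc.
pose w i := B i (Ordinal hn).
have wp : forall i, 0 < w i by move=> i; apply: hB.
have e : forall i, \sum_j B i j * w j = (\sum_i w i) * w i.
  move=> i; rewrite mulr_suml; apply: eq_bigr => j _.
  by rewrite hc mulrC.
have Sp : 0 < \sum_i w i by apply: sum_pos.
apply/le_anti/andP; split.
  apply: (rho_le hn B w) => //; try (by move=> i j; apply: ltW);
    try (by move=> i; rewrite e); try (by apply: ltW).
apply: (rho_ge hn B w) => //; try (by move=> i j; apply: ltW);
    try (by move=> i; rewrite e).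
Qed.

Theorem theorem3p2 (R : rcfType) (n : nat) (hn : (0 < n)%N) (A : 'M[R]_n)
    (hA : forall i j, 0 < A i j) :
  let avg := (n%:R)^-1 * \sum_(i < n) \sum_(j < n) A i j in
  let cond_i := is_max_rho_Omega A avg in
  let cond_ii :=
    (A *m const_mx 1 = spectral_radius A *: (const_mx 1 : 'cV[R]_n)) \/
    (exists d : 'rV[R]_n, (forall i, 0 <= d 0 i) /\ diag_mx d \in unitmx /\
                          diag_mx d *m A = const_mx 1) in
  let cond_iii := is_min_rho_Omega A avg in
  (cond_i <-> cond_ii) /\ (cond_ii <-> cond_iii).
Proof.
move=> avg cond_i cond_ii cond_iii.
pose i0 := Ordinal hn.
pose r i := \sum_j A i j.
have rp : forall i, 0 < r i by move=> i; apply: sum_pos.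
have nz : n%:R != 0 :> R by rewrite pnatr_eq0 -lt0n.
have np : 0 < n%:R :> R by rewrite ltr0n.
have avgp : 0 < avg by rewrite /avg mulr_gt0 ?invr_gt0 // sum_pos.
have ii_all : cond_ii -> forall B, in_Omega A B -> spectral_radius B = avg.
  case => [H1 | [d [d0 [du Hd]]]] B hB.
  - have hr : forall i, r i = spectral_radius A.
      move=> i; have /matrixP/(_ i 0) := H1; rewrite !mxE mulr1 => <-.
      by apply: eq_bigr => j _; rewrite mxE mulr1.
    rewrite (eq_rows_rho hn B (spectral_radius A)); last 2 first.
    + exact: (omega_pos _ _ hA hB).
    + by move=> i; rewrite (omega_rowsum _ _ hB); exact: hr.
    rewrite /avg (eq_bigr (fun _ => spectral_radius A)); last by move=> i _; exact: hr.
    by rewrite sumr_const card_ord -[X in _ * X]mulr_natl mulrA mulVf ?mul1r.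
  - rewrite mul_diag_mx in Hd.
    have hd : forall i j, d 0 i * A i j = 1.
      by move=> i j; have /matrixP/(_ i j) := Hd; rewrite !mxE.
    have hc : forall i j, A i j = A i i0.
      move=> i j; have dn : d 0 i != 0.
        by apply/eqP => e; have := hd i j; rewrite e mul0r => /eqP; rewrite eq_sym oner_eq0.
      by apply: (mulfI dn); rewrite !hd.
    have hBc : forall i j, B i j = B i i0.
      by move=> i j; have [s Hs] := hB i; rewrite !Hs hc [RHS]hc.
    rewrite (const_rows_rho hn B); last 2 first.
    + exact: (omega_pos _ _ hA hB).
    + exact: hBc.
    rewrite /avg [in RHS](eq_bigr (fun i => A i i0 *+ n)); last first.
      by move=> i _; rewrite (eq_bigr (fun _ => A i i0)) ?sumr_const ?card_ord // => j _; rewrite hc.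
    rewrite sumrMnl -[X in _ * X]mulr_natl mulrA mulVf // mul1r.
    apply: eq_bigr => i _; have [s Hs] := hB i; by rewrite Hs hc.
have notii1 : ~ cond_ii -> exists i j, A i j != A i i0.
  move=> nii; case: (boolP [forall i, [forall j, A i j == A i i0]]) => [Hall|].
    exfalso; apply: nii; right; exists (\row_i (A i i0)^-1); split; [|split].
    - by move=> i; rewrite mxE invr_ge0 ltW.
    - rewrite unitmxE det_diag unitfE; apply/prodf_neq0 => i _.
      by rewrite mxE invr_eq0 gt_eqF.
    - apply/matrixP => i j; rewrite mul_diag_mx !mxE.
      have /forallP/(_ j)/eqP -> := forallP Hall i.
      by rewrite mulVf // gt_eqF.
  rewrite negb_forall; case/existsP => i.
  rewrite negb_forall; case/existsP => j hj.
  by exists i, j.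
have notii2 : ~ cond_ii -> exists k, r k != r i0.
  move=> nii; case: (boolP [forall k, r k == r i0]) => [Hall|].
    exfalso; apply: nii; left.
    have rho : spectral_radius A = r i0.
      by apply: (eq_rows_rho hn A (r i0) hA) => i; apply/eqP/(forallP Hall i).
    apply/matrixP => i j; rewrite !mxE rho mulr1 -(eqP (forallP Hall i)).
    by apply: eq_bigr => k _; rewrite mxE mulr1.
  rewrite negb_forall; case/existsP => k hk.
  by exists k.
have mE : forall i, (\sum_j A i j) * (\sum_j r j) / n%:R = avg * r i.
  by move=> i; rewrite /avg /r; field.
have notii_max : ~ cond_ii -> exists2 B, in_Omega A B & avg < spectral_radius B.
  move=> nii; have [i1 [j1 hj1]] := notii1 nii; have [k1 hk1] := notii2 nii.
  have [sg Hs] := fin_all_exists (fun i => perm_max hn (fun j => A i j) r).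
  pose B := \matrix_(i, j) A i (sg i j).
  have Be : forall i, \sum_j B i j * r j = \sum_j A i (sg i j) * r j.
    by move=> i; apply: eq_bigr => j _; rewrite mxE.
  exists B.
    by move=> i; exists (sg i) => j; rewrite mxE.
  apply: (rho_gt hn B r avg) => //.
  - by move=> i j; rewrite mxE.
  - by move=> i; rewrite Be -mE; have [h _] := Hs i; exact: h.
  - exists i1; rewrite Be -mE; have [_ h] := Hs i1; apply: h.
    exact: (perm_nonconst (fun j => A i1 j) r j1 i0 k1 i0).
have notii_min : ~ cond_ii -> exists2 B, in_Omega A B & spectral_radius B < avg.
  move=> nii; have [i1 [j1 hj1]] := notii1 nii; have [k1 hk1] := notii2 nii.
  have [sg Hs] := fin_all_exists (fun i => perm_min hn (fun j => A i j) r).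
  pose B := \matrix_(i, j) A i (sg i j).
  have Be : forall i, \sum_j B i j * r j = \sum_j A i (sg i j) * r j.
    by move=> i; apply: eq_bigr => j _; rewrite mxE.
  exists B.
    by move=> i; exists (sg i) => j; rewrite mxE.
  apply: (rho_lt hn B r avg) => //.
  - by move=> i j; rewrite mxE.
  - by move=> i; rewrite Be -mE; have [h _] := Hs i; exact: h.
  - exists i1; rewrite Be -mE; have [_ h] := Hs i1; apply: h.
    exact: (perm_nonconst (fun j => A i1 j) r j1 i0 k1 i0).
split; split.
- move=> [_ Hle]; apply: NNPP => nii; have [B hB lt] := notii_max nii.
  by have := Hle B hB; rewrite leNgt lt.
- move=> hii; split; first by exists A; [exact: omega_refl | exact: ii_all hii A (omega_refl A)].
  by move=> B hB; rewrite (ii_all hii B hB).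
- move=> hii; split; first by exists A; [exact: omega_refl | exact: ii_all hii A (omega_refl A)].
  by move=> B hB; rewrite (ii_all hii B hB).
- move=> [_ Hle]; apply: NNPP => nii; have [B hB lt] := notii_min nii.
  by have := Hle B hB; rewrite leNgt lt.
Qed.
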